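(* Let $X$ and $Y$ be nontrivial real Banach spaces. (a) If $X^*$ has the weak$^*$ local diameter $2$ property, then $(X\oplus_1 Y)^*$ has the weak$^*$ local diameter $2$ property. (b) If $X^*$ and $Y^*$ have the weak$^*$ local diameter $2$ property and $1<p\leq\infty$, then $(X\oplus_p Y)^*$ has the weak$^*$ local diameter $2$ property. (c) If $(X\oplus_p Y)^*$ has the weak$^*$ local diameter $2$ property, where $1<p\leq\infty$, then $X^*$ has the weak$^*$ local diameter $2$ property.
   Context: For $1\le p<\infty$, $X\oplus_p Y$ is $X\times Y$ with norm $(\|x\|^p+\|y\|^p)^{1/p}$; $X\oplus_\infty Y$ has norm $\max\{\|x\|,\|y\|\}$. For a Banach space $Z$, a weak$^*$ slice of $B_{Z^*}$ is a set $\{z^*\in B_{Z^*}: z^*(z)>1-\alpha\}$ with $z\in S_Z$, $\alpha>0$; $Z^*$ has the weak$^*$ local diameter $2$ property if every weak$^*$ slice of $B_{Z^*}$ has diameter $2$. *)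

(* Defs.v *)
From HB Require Import structures.
From mathcomp Require Import all_boot all_order all_algebra.
From mathcomp Require Import all_classical all_reals all_analysis.
Set Implicit Arguments. Unset Strict Implicit. Unset Printing Implicit Defensive.
Import Order.TTheory GRing.Theory Num.Theory.
Import numFieldNormedType.Exports.
Local Open Scope classical_set_scope.
Local Open Scope ring_scope.

(* A real normed space is presented as a real vector space V together with
   its norm N : V -> R. The dual V^* consists of the bounded (= continuous)
   linear functionals f : V -> R, with the operator norm. *)
Section Dual.
Variables (R : realType) (V : lmodType R) (N : V -> R).

Definition is_dual_elem (f : V -> R) : Prop :=
  (forall (a : R) (x y : V), f (a *: x + y) = a * f x + f y) /\
  (exists C : R, forall x, `|f x| <= C * N x).

Definition opnorm (f : V -> R) : R :=
  sup [set `|f x| | x in [set x : V | N x <= 1]].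

Definition dual_ball : set (V -> R) :=
  [set f | is_dual_elem f /\ opnorm f <= 1].

Definition wstar_slice (z : V) (alpha : R) : set (V -> R) :=
  [set f | dual_ball f /\ 1 - alpha < f z].

Definition dual_diam (S : set (V -> R)) : R :=
  sup [set r | exists f g, S f /\ S g /\ r = opnorm (fun v => f v - g v)].

Definition wstar_LD2P : Prop :=
  forall z : V, N z = 1 -> forall alpha : R, 0 < alpha ->
    dual_diam (wstar_slice z alpha) = 2.
End Dual.

Definition psum_norm (R : realType) (X Y : normedModType R) (p : \bar R)
  (v : X * Y) : R :=
  match p with
  | +oo%E => Num.max `|v.1| `|v.2|
  | EFin r => (`|v.1| `^ r + `|v.2| `^ r) `^ r^-1
  | -oo%E => 0
  end.

(* Main.v *)
Require Import Defs.
From HB Require Import structures.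
From mathcomp Require Import all_boot all_order all_algebra.
From mathcomp Require Import all_classical all_reals all_analysis.
From mathcomp Require Import ring lra.
Import Order.TTheory GRing.Theory Num.Theory.
Import numFieldNormedType.Exports.
Local Open Scope ring_scope.
Set Implicit Arguments. Unset Strict Implicit.
Local Open Scope classical_set_scope.

Section Lin.
Variables (R : realType) (V : lmodType R) (f : V -> R).
Hypothesis fl : forall (a : R) (x y : V), f (a *: x + y) = a * f x + f y.
Lemma lin0 : f 0 = 0.
Proof. have := fl 1 0 0; rewrite scaler0 addr0 mul1r; lra. Qed.
Lemma linZ a x : f (a *: x) = a * f x.
Proof. by have := fl a x 0; rewrite addr0 lin0 addr0. Qed.
Lemma linD x y : f (x + y) = f x + f y.
Proof. by have := fl 1 x y; rewrite scale1r mul1r. Qed.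
Lemma linN x : f (- x) = - f x.
Proof. by rewrite -scaleN1r linZ mulN1r. Qed.
End Lin.

Section Gen.
Variables (R : realType) (V : lmodType R) (N : V -> R).
Hypothesis N_ge0 : forall v, 0 <= N v.
Hypothesis NZ : forall (a : R) v, N (a *: v) = `|a| * N v.

Lemma N0 : N 0 = 0.
Proof using N_ge0 NZ. by rewrite -(scale0r (0:V)) NZ normr0 mul0r. Qed.

Lemma opnorm_ub f C x : (forall x, `|f x| <= C * N x) -> N x <= 1 ->
  `|f x| <= opnorm N f.
Proof using N_ge0 NZ.
move=> hC hx; apply: ub_le_sup; last by exists x.
exists `|C| => _ [y hy <-].
have h1 : C * N y <= `|C| * N y by apply: ler_wpM2r; [exact: N_ge0|exact: ler_norm].
have h2 : `|C| * N y <= `|C| by rewrite -[X in _ <= X]mulr1; apply: ler_wpM2l.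
have := hC y; lra.
Qed.

Lemma opnorm_le f c : (forall x, N x <= 1 -> `|f x| <= c) -> opnorm N f <= c.
Proof using N_ge0 NZ.
move=> h; apply: ge_sup.
  by exists `|f 0|, 0 => //; rewrite /= N0.
by move=> _ [x hx <-]; exact: h.
Qed.

Lemma ball_le f : dual_ball N f -> forall v, `|f v| <= N v.
Proof using N_ge0 NZ.
move=> [[fl [C hC]] hn] v; apply/ler_addgt0Pr => e e0.
set t := N v + e.
have t0 : 0 < t by have := N_ge0 v; rewrite /t; lra.
have : `|f (t^-1 *: v)| <= 1.
  apply: le_trans _ hn; apply: (@opnorm_ub _ C) => //.
  rewrite NZ gtr0_norm ?invr_gt0 // ler_pdivrMl // mulr1 /t; lra.
rewrite (linZ fl) normrM gtr0_norm ?invr_gt0 // ler_pdivrMl // mulr1.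
by [].
Qed.

Lemma ball_of f : (forall (a : R) (x y : V), f (a *: x + y) = a * f x + f y) ->
  (forall v, `|f v| <= N v) -> dual_ball N f.
Proof using N_ge0 NZ.
move=> fl h; split; first by split => //; exists 1 => v; rewrite mul1r.
by apply: opnorm_le => x hx; exact: le_trans (h x) hx.
Qed.

Lemma ball_lin f : dual_ball N f ->
  forall (a : R) (x y : V), f (a *: x + y) = a * f x + f y.
Proof using N_ge0 NZ. by case=> [[]]. Qed.

Lemma opnorm_lb f x : dual_ball N f -> N x <= 1 -> `|f x| <= opnorm N f.
Proof using N_ge0 NZ. by move=> [[_ [C hC]] _]; exact: opnorm_ub. Qed.

Lemma opnorm_lb2 f g x : dual_ball N f -> dual_ball N g -> N x <= 1 ->
  `|f x - g x| <= opnorm N (fun v => f v - g v).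
Proof using N_ge0 NZ.
move=> hf hg hx; apply: (@opnorm_ub _ 2) hx => v.
have := ball_le hf v; have := ball_le hg v.
have := ler_normB (f v) (g v); lra.
Qed.

Lemma diam2 (S : set (V -> R)) : (forall f, S f -> dual_ball N f) ->
  (forall e, 0 < e -> exists f g, S f /\ S g /\
     2 - e < opnorm N (fun v => f v - g v)) ->
  dual_diam N S = 2.
Proof using N_ge0 NZ.
move=> SB H; rewrite /dual_diam.
set E := (X in sup X).
have Eub : forall r, E r -> r <= 2.
  move=> _ [f [g [Sf [Sg ->]]]]; apply: opnorm_le => x hx.
  have := ball_le (SB _ Sf) x; have := ball_le (SB _ Sg) x.
  have := ler_normB (f x) (g x); lra.
have En : exists r, E r.
  have [f [g [Sf [Sg _]]]] := H 1 ltr01.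
  by exists (opnorm N (fun v => f v - g v)), f, g.
apply/le_anti/andP; split; first exact: ge_sup.
apply/ler_addgt0Pr => e e0.
have [f [g [Sf [Sg hfg]]]] := H e e0.
have : opnorm N (fun v => f v - g v) <= sup E.
  by apply: ub_le_sup; [exists 2 | exists f, g].
lra.
Qed.

Lemma diam_extract (S : set (V -> R)) : dual_diam N S = 2 ->
  forall e, 0 < e -> exists f g, S f /\ S g /\
     2 - e < opnorm N (fun v => f v - g v).
Proof using N_ge0 NZ.
move=> h e e0; apply: contrapT => hn; move: h; rewrite /dual_diam.
set E := (X in sup X).
have [En|En] := pselect (exists r, E r).
  have : sup E <= 2 - e.
    apply: ge_sup => //.
    move=> _ [f [g [Sf [Sg ->]]]]; rewrite leNgt; apply/negP => hr.
    by apply: hn; exists f, g.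
  lra.
have -> : E = set0.
  by apply/seteqP; split => r // hr; apply: En; exists r.
rewrite sup0; lra.
Qed.

Lemma opnorm_extract f c : c < opnorm N f -> exists x, N x <= 1 /\ c < `|f x|.
Proof using N_ge0 NZ.
move=> hc; apply: contrapT => hn.
have : opnorm N f <= c.
  apply: opnorm_le => x hx; rewrite leNgt; apply/negP => h.
  by apply: hn; exists x.
lra.
Qed.

Lemma opnorm_extract_pos f g c : dual_ball N f -> dual_ball N g ->
  c < opnorm N (fun v => f v - g v) -> exists x, N x <= 1 /\ c < f x - g x.
Proof using N_ge0 NZ.
move=> hf hg /opnorm_extract [x [hx hc]].
have [D0|D0] := leP 0 (f x - g x).
  by exists x; split => //; rewrite -(ger0_norm D0).
exists (- x); split; first by rewrite -scaleN1r NZ normrN normr1 mul1r.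
rewrite (linN (ball_lin hf)) (linN (ball_lin hg)).
move: hc; rewrite (ltr0_norm D0); lra.
Qed.

End Gen.

Lemma mod_eq (V : zmodType) (u1 u2 a b : V) : u1 + a = u2 + b -> u2 - u1 = a - b.
Proof.
move=> e; apply/eqP; rewrite subr_eq; apply/eqP.
by rewrite -(addrK b u2) -e [RHS]addrC addrA.
Qed.

Section HB.
Variables (R : realType) (Y : normedModType R) (y : Y).

Definition goodA (A : set (Y * R)) : Prop :=
  [/\ A (y, `|y|),
   (forall v t s, A (v, t) -> A (v, s) -> t = s),
   (forall (a : R) v t w s, A (v, t) -> A (w, s) -> A (a *: v + w, a * t + s)) &
   (forall v t, A (v, t) -> t <= `|v|)].

Definition PA (A : set (Y * R)) : Prop := A = set0 \/ goodA A.

Lemma PA_good A p : PA A -> A p -> goodA A.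
Proof. by case=> // ->. Qed.

Lemma good0 A : goodA A -> A (0, 0).
Proof.
case=> hy _ hc _; have := hc (-1) _ _ _ _ hy hy.
by rewrite scaleN1r addNr mulN1r addNr.
Qed.

Lemma goodZ A (a : R) v t : goodA A -> A (v, t) -> A (a *: v, a * t).
Proof.
move=> hA hv; have := (let: And4 _ _ hc _ := hA in hc) a _ _ _ _ hv (good0 hA).
by rewrite !addr0.
Qed.

Lemma chainP (F : set (set (Y * R))) : F `<=` PA -> total_on F subset ->
  PA (\bigcup_(X in F) X).
Proof.
move=> FP tot.
have [[X0 FX0 [p X0p]]|hne] := pselect (exists2 X, F X & exists p, X p); last first.
  left; apply/seteqP; split => p // [X FX Xp]; apply: hne; exists X => //.
  by exists p.
have G : forall X, F X -> forall p, X p -> goodA X.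
  by move=> X FX q Xq; exact: (PA_good (FP _ FX) Xq).
have two : forall X1 X2 p1 p2, F X1 -> F X2 -> X1 p1 -> X2 p2 ->
    exists X, [/\ F X, goodA X, X p1 & X p2].
  move=> X1 X2 p1 p2 F1 F2 X1p X2p; have [s12|s21] := tot _ _ F1 F2.
  - by exists X2; split => //; [exact: (G _ F2 _ X2p)|exact: s12].
  - by exists X1; split => //; [exact: (G _ F1 _ X1p)|exact: s21].
right; have gX0 := G _ FX0 _ X0p.
split.
- by exists X0 => //; case: gX0.
- move=> v t s [X1 F1 h1] [X2 F2 h2].
  have [X [_ [_ hf _ _] h1' h2']] := two _ _ _ _ F1 F2 h1 h2.
  exact: hf h1' h2'.
- move=> a v t w s [X1 F1 h1] [X2 F2 h2].
  have [X [FX [_ _ hc _] h1' h2']] := two _ _ _ _ F1 F2 h1 h2.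
  by exists X => //; exact: hc.
- move=> v t [X FX h]; have [_ _ _ hd] := G _ FX _ h; exact: hd.
Qed.

Definition line : set (Y * R) := [set p | exists c : R, p = (c *: y, c * `|y|)].

Lemma line_good : goodA line.
Proof.
split.
- by exists 1; rewrite scale1r mul1r.
- move=> v t s [c [-> ->]] [d [e1 ->]].
  have [->|y0] := eqVneq y 0; first by rewrite normr0 !mulr0.
  move/eqP: e1; rewrite -subr_eq0 -scalerBl scaler_eq0 (negbTE y0) orbF subr_eq0.
  by move/eqP ->.
- move=> a v t w s [c [-> ->]] [d [-> ->]].
  by exists (a * c + d); rewrite scalerDl scalerA mulrDl mulrA.
- move=> v t [c [-> ->]]; rewrite normrZ; apply: ler_wpM2r => //; exact: ler_norm.
Qed.

Section Ext.
Variable A : set (Y * R).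
Hypothesis gA : goodA A.
Variable v : Y.
Hypothesis nv : forall t, ~ A (v, t).

Let E := [set r | exists u t, A (u, t) /\ r = t - `|u - v|].

Let Ebound w t' : A (w, t') -> forall r, E r -> r <= `|w + v| - t'.
Proof.
move=> hw _ [u [t [hu ->]]].
have [_ _ hc hd] := gA.
have := hd _ _ (hc 1 _ _ _ _ hu hw); rewrite scale1r mul1r => h.
have : `|u + w| <= `|u - v| + `|w + v|.
  by rewrite (_ : u + w = (u - v) + (w + v)) ?ler_normD // addrACA addNr addr0.
lra.
Qed.

Let s := sup E.

Let Ene : E !=set0.
Proof. by exists (0 - `|0 - v|), 0, 0; split => //; exact: good0. Qed.

Let s_ge u t : A (u, t) -> t - `|u - v| <= s.
Proof.
move=> hu; apply: ub_le_sup; last by exists u, t.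
exists (`|0 + v| - 0); apply: Ebound; exact: good0.
Qed.

Let s_le w t' : A (w, t') -> s <= `|w + v| - t'.
Proof. by move=> hw; apply: ge_sup => //; exact: Ebound. Qed.

Definition extA : set (Y * R) :=
  [set p | exists u t (c : R), A (u, t) /\ p = (u + c *: v, t + c * s)].

Lemma extA_good : goodA extA.
Proof.
have [hy hf hc hd] := gA.
split.
- by exists y, `|y|, 0; rewrite scale0r mul0r !addr0.
- move=> x t1 t2 [u1 [s1 [c1 [h1 [e1 ->]]]]] [u2 [s2 [c2 [h2 [e2 ->]]]]].
  have [c12|c12] := eqVneq c1 c2.
    subst c2; move: e2; rewrite e1 => /addIr e; subst u2.
    by rewrite (hf _ _ _ h1 h2).
  exfalso; have NV := @nv ((c1 - c2)^-1 * (s2 - s1)); apply: NV.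
  have hdiff := hc (-1) _ _ _ _ h1 h2.
  have := goodZ ((c1 - c2)^-1) gA hdiff.
  have -> : (c1 - c2)^-1 *: (-1 *: u1 + u2) = v.
    have e : u2 - u1 = (c1 - c2) *: v.
      by rewrite scalerBl; apply: mod_eq; rewrite -e1 -e2.
    by rewrite scaleN1r [- u1 + _]addrC e scalerA mulVf ?subr_eq0 // scale1r.
  by rewrite (_ : -1 * s1 + s2 = s2 - s1) //; lra.
- move=> a x t w t' [u1 [s1 [c1 [h1 [-> ->]]]]] [u2 [s2 [c2 [h2 [-> ->]]]]].
  exists (a *: u1 + u2), (a * s1 + s2), (a * c1 + c2); split; first exact: hc.
  congr pair.
  + by rewrite scalerDr scalerDl scalerA addrACA.
  + by rewrite mulrDr mulrDl mulrA; lra.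
- move=> x t [u [t1 [c [hu [-> ->]]]]].
  have [c0|c0|->] := ltgtP c 0; last by rewrite scale0r mul0r !addr0; exact: hd.
  + set d := - c.
    have d0 : 0 < d by rewrite /d oppr_gt0.
    have := s_ge (goodZ (d^-1) gA hu).
    have -> : `|d^-1 *: u - v| = d^-1 * `|u + c *: v|.
      have -> : d^-1 *: u - v = d^-1 *: (u + c *: v).
        rewrite scalerDr scalerA (_ : d^-1 * c = -1) ?scaleN1r //.
        by rewrite /d invrN mulNr mulVf ?lt_eqF.
      by rewrite normrZ gtr0_norm ?invr_gt0.
    move=> h.
    have h2 : d * (d^-1 * t1 - d^-1 * `|u + c *: v|) <= d * s.
      by apply: ler_wpM2l; [exact: ltW|].
    move: h2; rewrite mulrBr !mulrA mulfV ?gt_eqF // !mul1r /d; lra.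
  + have := s_le (goodZ (c^-1) gA hu).
    have -> : `|c^-1 *: u + v| = c^-1 * `|u + c *: v|.
      have -> : c^-1 *: u + v = c^-1 *: (u + c *: v).
        by rewrite scalerDr scalerA mulVf ?gt_eqF // scale1r.
      by rewrite normrZ gtr0_norm ?invr_gt0.
    move=> h.
    have h2 : c * s <= c * (c^-1 * `|u + c *: v| - c^-1 * t1).
      by apply: ler_wpM2l; [exact: ltW|].
    move: h2; rewrite mulrBr !mulrA mulfV ?gt_eqF // !mul1r; lra.
Qed.

Lemma extA_proper : A `<` extA.
Proof.
split.
  by move=> [u t] h; exists u, t, 0; rewrite scale0r mul0r !addr0.
move=> sub; apply: (@nv s).
have : extA (v, s) by exists 0, 0, 1; split; [exact: good0|rewrite scale1r mul1r !add0r].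
by move/sub.
Qed.
End Ext.

Lemma hahn_banach : exists g : Y -> R,
  [/\ (forall (a : R) x z, g (a *: x + z) = a * g x + g z),
      (forall x, `|g x| <= `|x|) & g y = `|y|].
Proof.
have [A [PAA Amax]] := Zorn_bigcup chainP.
have gA : goodA A.
  case: PAA => // A0; exfalso; apply: (Amax line); last by right; exact: line_good.
  rewrite A0; split => //; move=> /(_ (0 *: y, 0 * `|y|)) h.
  by have := h (ex_intro _ 0 erefl).
have tot : forall x, exists t, A (x, t).
  move=> x; apply: contrapT => nx.
  apply: (Amax (extA A x)); first by apply: extA_proper => // t h; apply: nx; exists t.
  right; apply: extA_good => // t h; apply: nx; by exists t.
have [g hg] := choice tot.
have [hy hf hc hd] := gA.
have gl : forall (a : R) x z, g (a *: x + z) = a * g x + g z.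
  by move=> a x z; apply: (hf _ _ _ (hg _)); apply: hc.
exists g; split => //.
- move=> x; rewrite ler_norml; apply/andP; split; last exact: hd.
  have := hd _ _ (hg (- x)); rewrite normrN (linN gl); lra.
- exact: (hf _ _ _ (hg y) hy).
Qed.
End HB.

Section Psum.
Variables (R : realType) (X Y : normedModType R).

Lemma powRK (a r : R) : 0 <= a -> 0 < r -> (a `^ r) `^ r^-1 = a.
Proof. by move=> a0 r0; rewrite -powRrM mulfV ?gt_eqF // powRr1. Qed.

Section Fin.
Variables (r : R).
Hypothesis r0 : 0 < r.
Let N := @psum_norm R X Y r%:E.

Lemma pf_ge0 v : 0 <= N v.
Proof. exact: powR_ge0. Qed.

Lemma pfZ (a : R) v : N (a *: v) = `|a| * N v.
Proof.
rewrite /N /psum_norm /= !normrZ !powRM // -mulrDr powRM ?powR_ge0 //.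
  by rewrite powRK.
Qed.

Lemma pf_le (a b : R) : 0 <= a -> 0 <= b -> a <= (a `^ r + b `^ r) `^ r^-1.
Proof.
move=> a0 b0; rewrite -{1}(powRK a0 r0); apply: ge0_ler_powR.
- by rewrite invr_ge0 ltW.
- by rewrite nnegrE powR_ge0.
- by rewrite nnegrE addr_ge0 ?powR_ge0.
by rewrite lerDl powR_ge0.
Qed.

Lemma pf_le1 v : `|v.1| <= N v.
Proof. exact: pf_le. Qed.

Lemma pf_le2 v : `|v.2| <= N v.
Proof. by rewrite /N /psum_norm addrC; exact: pf_le. Qed.

Lemma pf_x0 x : N (x, 0) = `|x|.
Proof. by rewrite /N /psum_norm /= normr0 powR0 ?gt_eqF // addr0 powRK. Qed.

Lemma pf_0y y : N (0, y) = `|y|.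
Proof. by rewrite /N /psum_norm /= normr0 powR0 ?gt_eqF // add0r powRK. Qed.
End Fin.

Section Inf.
Let N := @psum_norm R X Y +oo%E.

Lemma pinf_ge0 v : 0 <= N v.
Proof. by rewrite /N /psum_norm le_max normr_ge0. Qed.

Lemma pinfZ (a : R) v : N (a *: v) = `|a| * N v.
Proof. by rewrite /N /psum_norm /= !normrZ maxr_pMr. Qed.

Lemma pinf_le1 v : `|v.1| <= N v.
Proof. by rewrite /N /psum_norm le_max lexx. Qed.

Lemma pinf_le2 v : `|v.2| <= N v.
Proof. by rewrite /N /psum_norm le_max lexx orbT. Qed.

Lemma pinf_x0 x : N (x, 0) = `|x|.
Proof. by rewrite /N /psum_norm /= normr0 max_l. Qed.
End Inf.

Lemma p1E v : @psum_norm R X Y 1%E v = `|v.1| + `|v.2|.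
Proof. by rewrite /psum_norm invr1 !powRr1 // addr_ge0. Qed.

End Psum.

Section Parts.
Variable R : realType.

Lemma unit_for (X : normedModType R) (hX : exists x : X, x != 0) (x : X) :
  exists x0 : X, `|x0| = 1 /\ x = `|x| *: x0.
Proof.
have [->|x0] := eqVneq x 0.
  have [e he] := hX; exists (`|e|^-1 *: e); split; last by rewrite normr0 scale0r.
  by rewrite normrZ normrV ?unitfE ?normr_eq0 // normr_id mulVf ?normr_eq0.
exists (`|x|^-1 *: x); split.
  by rewrite normrZ normrV ?unitfE ?normr_eq0 // normr_id mulVf ?normr_eq0.
by rewrite scalerA mulfV ?normr_eq0 // scale1r.
Qed.

Lemma nge0 (X : normedModType R) (x : X) : 0 <= `|x|.
Proof. exact: normr_ge0. Qed.
Lemma nZ (X : normedModType R) (c : R) (x : X) : `|c *: x| = `|c| * `|x|.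
Proof. exact: normrZ. Qed.

Lemma X_extract (X : normedModType R) : wstar_LD2P (fun x : X => `|x|) ->
  forall x0 : X, `|x0| = 1 -> forall a e : R, 0 < a -> 0 < e ->
  exists f1 f2, [/\ dual_ball (fun x : X => `|x|) f1,
     dual_ball (fun x : X => `|x|) f2, 1 - a < f1 x0, 1 - a < f2 x0 &
     exists u, `|u| <= 1 /\ 2 - e < f1 u - f2 u].
Proof.
move=> hL x0 nx0 a e a0 e0.
have Nge0 : forall x : X, 0 <= `|x| by move=> ?; exact: normr_ge0.
have NZ : forall (c : R) (x : X), `|c *: x| = `|c| * `|x| by move=> *; exact: normrZ.
have [f1 [f2 [[b1 s1] [[b2 s2] hD]]]] := diam_extract Nge0 NZ (hL x0 nx0 a a0) e0.
have [u [hu hu2]] := opnorm_extract_pos Nge0 NZ b1 b2 hD.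
by exists f1, f2; split => //; exists u.
Qed.

Lemma part_a (X Y : normedModType R) (hX : exists x : X, x != 0) :
  wstar_LD2P (fun x : X => `|x|) -> wstar_LD2P (@psum_norm R X Y 1%E).
Proof.
move=> hL [x y] hz a a0.
rewrite p1E /= in hz.
set N := @psum_norm R X Y 1%E.
have Nge0 : forall v, 0 <= N v by move=> v; exact: pf_ge0.
have NZ : forall (c : R) v, N (c *: v) = `|c| * N v by move=> c v; exact: (pfZ ltr01).
apply: (diam2 Nge0 NZ) => [f [] //|e e0].
have [x0 [nx0 ex]] := unit_for hX x.
have a20 : 0 < a / 2 by rewrite divr_gt0.
have [f1 [f2 [b1 b2 s1 s2 [u [hu hD]]]]] := X_extract hL nx0 a20 e0.
have [g [gl gb gy]] := hahn_banach y.
have mk : forall f, dual_ball (fun x : X => `|x|) f -> 1 - a / 2 < f x0 ->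
    wstar_slice N (x, y) a (fun v => f v.1 + g v.2).
  move=> f bf sf; split.
    apply: (ball_of Nge0 NZ).
      by move=> c v w /=; rewrite (ball_lin (@nge0 X) (@nZ X) bf) gl; lra.
    move=> v; rewrite /N p1E.
    have := ball_le (@nge0 X) (@nZ X) bf v.1.
    have := gb v.2; have := ler_normD (f v.1) (g v.2); lra.
  rewrite /= gy ex (linZ (ball_lin (@nge0 X) (@nZ X) bf)).
  have h1 := ler_wpM2l (normr_ge0 x) (ltW sf).
  have h2 : `|x| * (a / 2) <= a / 2.
    rewrite -[X in _ <= X]mul1r; apply: ler_wpM2r; first exact: ltW.
    have := normr_ge0 y; lra.
  have := normr_ge0 y; lra.
exists (fun v => f1 v.1 + g v.2), (fun v => f2 v.1 + g v.2).
split; first exact: mk.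
split; first exact: mk.
have hb1 := (mk _ b1 s1).1; have hb2 := (mk _ b2 s2).1.
apply: lt_le_trans (opnorm_lb2 Nge0 NZ hb1 hb2 (x := (u, 0)) _).
  rewrite /= (lin0 gl); apply: lt_le_trans (ler_norm _); lra.
by rewrite /N p1E /= normr0 addr0.
Qed.

End Parts.

Section PartB.
Variable R : realType.

Lemma pair_lin (X Y : lmodType R) (a : R) (x w : X) (y z : Y) :
  ((a *: x + w, a *: y + z) : X * Y) = a *: (x, y) + (w, z).
Proof. by []. Qed.

Lemma convex_gt (A B F G c : R) : 0 <= A -> 0 <= B -> A + B = 1 ->
  c < F -> c < G -> c < A * F + B * G.
Proof.
move=> hA hB hAB hF hG.
have [FG|GF] := leP F G.
  have := ler_wpM2l hB FG.
  have : A * F + B * F = F by rewrite -mulrDl hAB mul1r.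
  lra.
have := ler_wpM2l hA (ltW GF).
have : A * G + B * G = G by rewrite -mulrDl hAB mul1r.
lra.
Qed.

Lemma single (V : lmodType R) (N : V -> R) (W : normedModType R)
  (P : V -> W) (J : W -> V) :
  (forall v, 0 <= N v) -> (forall (c : R) v, N (c *: v) = `|c| * N v) ->
  (forall (c : R) v w, P (c *: v + w) = c *: P v + P w) ->
  (forall v, `|P v| <= N v) -> (forall u, N (J u) = `|u|) ->
  (forall u, P (J u) = u) ->
  wstar_LD2P (fun x : W => `|x|) ->
  forall z, `|P z| = 1 -> forall a, 0 < a -> dual_diam N (wstar_slice N z a) = 2.
Proof.
move=> Nge0 NZ Pl PN NJ PJ hL z hz a a0.
apply: (diam2 Nge0 NZ) => [f [] //|e e0].
have [f1 [f2 [b1 b2 s1 s2 [u [hu hD]]]]] := X_extract hL hz a0 e0.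
have mk : forall f, dual_ball (fun x : W => `|x|) f -> dual_ball N (fun v => f (P v)).
  move=> f bf; apply: (ball_of Nge0 NZ).
    by move=> c v w; rewrite Pl (ball_lin (@nge0 _ W) (@nZ _ W) bf).
  move=> v; exact: le_trans (ball_le (@nge0 _ W) (@nZ _ W) bf (P v)) (PN v).
exists (fun v => f1 (P v)), (fun v => f2 (P v)).
split; first by split => //; exact: mk.
split; first by split => //; exact: mk.
apply: lt_le_trans (opnorm_lb2 Nge0 NZ (mk _ b1) (mk _ b2) (x := J u) _).
  by rewrite PJ; apply: lt_le_trans (ler_norm _).
by rewrite NJ.
Qed.

Lemma part_b_inf (X Y : normedModType R) :
  wstar_LD2P (fun x : X => `|x|) -> wstar_LD2P (fun y : Y => `|y|) ->
  wstar_LD2P (@psum_norm R X Y +oo%E).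
Proof.
move=> hLX hLY [x y] hz a a0.
have Nge0 := @pinf_ge0 R X Y; have NZ := @pinfZ R X Y.
have [hxy|hxy] := leP `|x| `|y|.
- have h1 : `|y| = 1 by move: hz; rewrite /psum_norm /= max_r.
  apply: (single (P := snd) (J := fun u => (0, u))) => //.
  + exact: pinf_le2.
  + by move=> u; rewrite /psum_norm /= normr0 max_r.
- have h1 : `|x| = 1 by move: hz; rewrite /psum_norm /= max_l // ltW.
  apply: (single (P := fst) (J := fun u => (u, 0))) => //.
  + exact: pinf_le1.
  + exact: pinf_x0.
Qed.

End PartB.

Section PartB2.
Variable R : realType.

Lemma part_b_fin (X Y : normedModType R) (hX : exists x : X, x != 0)
  (hY : exists y : Y, y != 0) (r : R) : 1 < r ->
  wstar_LD2P (fun x : X => `|x|) -> wstar_LD2P (fun y : Y => `|y|) ->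
  wstar_LD2P (@psum_norm R X Y r%:E).
Proof.
move=> r1 hLX hLY [x y] hz a a0.
have r0 : 0 < r by lra.
have Nge0 := @pf_ge0 R X Y r; have NZ := @pfZ R X Y r r0.
set N := @psum_norm R X Y r%:E in Nge0 NZ *.
set A := `|x| `^ r; set B := `|y| `^ r.
have A0 : 0 <= A by exact: powR_ge0.
have B0 : 0 <= B by exact: powR_ge0.
have AB : A + B = 1.
  move: hz; rewrite /N /psum_norm /= -/A -/B => hz.
  by rewrite -(@powRK _ (A + B) (r^-1)) ?invr_gt0 ?addr_ge0 // hz invrK powR1.
set ca := `|x| `^ (r - 1); set cb := `|y| `^ (r - 1).
have ca0 : 0 <= ca by exact: powR_ge0.
have cb0 : 0 <= cb by exact: powR_ge0.
have caE : ca * `|x| = A by rewrite mulrC mulr_powRB1.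
have cbE : cb * `|y| = B by rewrite mulrC mulr_powRB1.
pose q := r / (r - 1).
have q0 : 0 < q by rewrite /q divr_gt0 // subr_gt0.
have pq : r^-1 + q^-1 = 1.
  rewrite /q invf_div; field; lra.
have caq : ca `^ q = A.
  by rewrite /ca -powRrM /q mulrC divfK // subr_eq0 gt_eqF.
have cbq : cb `^ q = B.
  by rewrite /cb -powRrM /q mulrC divfK // subr_eq0 gt_eqF.
have hold : forall s t : R, 0 <= s -> 0 <= t ->
    s * ca + t * cb <= (s `^ r + t `^ r) `^ r^-1.
  move=> s t s0 t0; apply: le_trans (hoelder2 s0 t0 ca0 cb0 r0 q0 pq) _.
  by rewrite caq cbq AB powR1 mulr1.
apply: (diam2 Nge0 NZ) => [f [] //|e e0].
have [x0 [nx0 ex]] := unit_for hX x.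
have [y0 [ny0 ey]] := unit_for hY y.
have [f1 [f2 [b1 b2 s1 s2 [u [hu hD]]]]] := X_extract hLX nx0 a0 e0.
have [g1 [g2 [c1 c2 t1 t2 [w [hw hE]]]]] := X_extract hLY ny0 a0 e0.
have mk : forall f g, dual_ball (fun x : X => `|x|) f -> dual_ball (fun y : Y => `|y|) g ->
    dual_ball N (fun v => ca * f v.1 + cb * g v.2).
  move=> f g bf bg; apply: (ball_of Nge0 NZ).
    move=> c v v' /=.
    rewrite (ball_lin (@nge0 _ X) (@nZ _ X) bf) (ball_lin (@nge0 _ Y) (@nZ _ Y) bg).
    lra.
  move=> v.
  have hf := ball_le (@nge0 _ X) (@nZ _ X) bf v.1.
  have hg := ball_le (@nge0 _ Y) (@nZ _ Y) bg v.2.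
  apply: le_trans (hold _ _ (normr_ge0 v.1) (normr_ge0 v.2)).
  apply: le_trans (ler_normD _ _) _; rewrite !normrM (ger0_norm ca0) (ger0_norm cb0).
  apply: lerD; rewrite mulrC; apply: ler_wpM2r => //.
have sl : forall f g, dual_ball (fun x : X => `|x|) f -> dual_ball (fun y : Y => `|y|) g ->
    1 - a < f x0 -> 1 - a < g y0 -> wstar_slice N (x, y) a (fun v => ca * f v.1 + cb * g v.2).
  move=> f g bf bg sf sg; split; first exact: mk.
  rewrite /= ex ey (linZ (ball_lin (@nge0 _ X) (@nZ _ X) bf)).
  rewrite (linZ (ball_lin (@nge0 _ Y) (@nZ _ Y) bg)) !mulrA caE cbE.
  exact: convex_gt.
exists (fun v => ca * f1 v.1 + cb * g1 v.2), (fun v => ca * f2 v.1 + cb * g2 v.2).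
split; first exact: sl.
split; first exact: sl.
apply: lt_le_trans (opnorm_lb2 Nge0 NZ (mk _ _ b1 c1) (mk _ _ b2 c2)
   (x := (`|x| *: u, `|y| *: w)) _).
  apply: lt_le_trans (ler_norm _).
  rewrite /= (linZ (ball_lin (@nge0 _ X) (@nZ _ X) b1)).
  rewrite (linZ (ball_lin (@nge0 _ X) (@nZ _ X) b2)).
  rewrite (linZ (ball_lin (@nge0 _ Y) (@nZ _ Y) c1)).
  rewrite (linZ (ball_lin (@nge0 _ Y) (@nZ _ Y) c2)).
  have -> : ca * (`|x| * f1 u) + cb * (`|y| * g1 w) -
      (ca * (`|x| * f2 u) + cb * (`|y| * g2 w)) =
      A * (f1 u - f2 u) + B * (g1 w - g2 w).
    by rewrite -caE -cbE; ring.
  exact: convex_gt.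
rewrite /N /psum_norm /= -hz /N /psum_norm /=.
apply: ge0_ler_powR.
- by rewrite invr_ge0 ltW.
- by rewrite nnegrE addr_ge0 ?powR_ge0.
- by rewrite nnegrE addr_ge0 ?powR_ge0.
apply: lerD; apply: ge0_ler_powR => //; try exact: ltW;
  rewrite ?nnegrE ?normr_ge0 // normrZ normr_id.
- by rewrite -[X in _ <= X]mulr1; apply: ler_wpM2l.
- by rewrite -[X in _ <= X]mulr1; apply: ler_wpM2l.
Qed.
End PartB2.

Section PartC.
Variable R : realType.

Lemma part_c_gen (X Y : normedModType R) (N : X * Y -> R) :
  (forall v, 0 <= N v) -> (forall (c : R) v, N (c *: v) = `|c| * N v) ->
  (forall v, `|v.1| <= N v) -> (forall v, `|v.2| <= N v) -> (forall x, N (x, 0) = `|x|) ->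
  (forall x : X, `|x| = 1 -> forall a d, 0 < a -> 0 < d -> exists a', [/\ 0 < a', a' <= a &
      forall h, dual_ball N h -> 1 - a' < h (x, 0) -> forall w, `|w| <= 1 -> h (0, w) <= d]) ->
  wstar_LD2P N -> wstar_LD2P (fun x : X => `|x|).
Proof.
move=> Nge0 NZ N1 N2 Nx0 key hL x hx a a0.
apply: (diam2 (@nge0 _ X) (@nZ _ X)) => [f [] //|e e0].
have e40 : 0 < e / 4 by rewrite divr_gt0.
have [a' [a'0 a'a hk]] := key x hx a _ a0 e40.
have hx0 : N (x, 0) = 1 by rewrite Nx0.
have e20 : 0 < e / 2 by rewrite divr_gt0.
have [h1 [h2 [[b1 s1] [[b2 s2] hD]]]] := diam_extract Nge0 NZ (hL _ hx0 a' a'0) e20.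
have [[u v] [huv hD2]] := opnorm_extract_pos Nge0 NZ b1 b2 hD.
have mk : forall h, dual_ball N h -> dual_ball (fun x : X => `|x|) (fun x => h (x, 0)).
  move=> h bh; apply: (ball_of (@nge0 _ X) (@nZ _ X)).
    move=> c x1 x2.
    have -> : ((c *: x1 + x2, 0) : X * Y) = c *: (x1, 0) + (x2, 0).
      by rewrite -pair_lin scaler0 addr0.
    exact: (ball_lin Nge0 NZ bh).
  by move=> x1; rewrite -Nx0; exact: (ball_le Nge0 NZ bh).
have habs : forall h, dual_ball N h -> 1 - a' < h (x, 0) -> `|h (0, v)| <= e / 4.
  move=> h bh sh; rewrite ler_norml; apply/andP; split; last first.
    apply: hk => //; apply: le_trans huv; exact: N2 (u, v).
  have : h (0, - v) <= e / 4.
    apply: hk => //; rewrite normrN; apply: le_trans huv; exact: N2 (u, v).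
  have -> : ((0, - v) : X * Y) = - (0, v) by rewrite -[- (0, v)]/(- 0, - v) oppr0.
  rewrite (linN (ball_lin Nge0 NZ bh)); lra.
have hsplit : forall h, dual_ball N h -> h (u, v) = h (u, 0) + h (0, v).
  move=> h bh; rewrite -(linD (ball_lin Nge0 NZ bh)).
  by rewrite -[(u, 0) + (0, v)]/(u + 0, 0 + v) addr0 add0r.
exists (fun x => h1 (x, 0)), (fun x => h2 (x, 0)).
split; first by split; [exact: mk| move: s1; lra].
split; first by split; [exact: mk| move: s2; lra].
apply: lt_le_trans (opnorm_lb2 (@nge0 _ X) (@nZ _ X) (mk _ b1) (mk _ b2) (x := u) _).
  apply: lt_le_trans (ler_norm _).
  move: hD2; rewrite (hsplit _ b1) (hsplit _ b2).
  have := habs _ b1 s1; have := habs _ b2 s2.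
  rewrite !ler_norml => /andP [? ?] /andP [? ?]; lra.
apply: le_trans huv; exact: N1 (u, v).
Qed.

End PartC.

Section Keys.
Variable R : realType.
Variables X Y : normedModType R.

Lemma key_inf (x : X) : `|x| = 1 -> forall a d : R, 0 < a -> 0 < d -> exists a', [/\ 0 < a', a' <= a &
      forall h, dual_ball (@psum_norm R X Y +oo%E) h -> 1 - a' < h (x, 0) ->
      forall w, `|w| <= 1 -> h (0, w) <= d].
Proof.
move=> hx a d a0 d0; exists (Num.min a d); split.
- by rewrite lt_min a0 d0.
- by rewrite ge_min lexx.
move=> h bh sh w hw.
have Nge0 := @pinf_ge0 R X Y; have NZ := @pinfZ R X Y.
have := ball_le Nge0 NZ bh (x, w).
have -> : ((x, w) : X * Y) = 1 *: (0, w) + (x, 0).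
  by rewrite -pair_lin scaler0 add0r addr0 scale1r.
rewrite (ball_lin Nge0 NZ bh) mul1r /psum_norm /= scale1r add0r addr0 hx max_l //.
have : Num.min a d <= d by rewrite ge_min lexx orbT.
move=> hmd hle; have := ler_norm (h (0, w) + h (x, 0)); lra.
by rewrite scale1r.
Qed.

Lemma powRK' (b t : R) : 0 <= b -> 0 < t -> (b `^ t^-1) `^ t = b.
Proof. by move=> b0 t0; rewrite -powRrM mulVf ?gt_eqF // powRr1. Qed.

Lemma key_fin (r : R) : 1 < r -> forall x : X, `|x| = 1 -> forall a d : R, 0 < a -> 0 < d ->
  exists a', [/\ 0 < a', a' <= a &
      forall h, dual_ball (@psum_norm R X Y r%:E) h -> 1 - a' < h (x, 0) ->
      forall w, `|w| <= 1 -> h (0, w) <= d].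
Proof.
move=> r1 x hx a d a0 d0.
have r0 : 0 < r by lra.
have r10 : 0 < r - 1 by lra.
have d20 : 0 < d / 2 by rewrite divr_gt0.
set t := Num.min 1 ((d / 2) `^ (r - 1)^-1).
have t0 : 0 < t by rewrite lt_min ltr01 powR_gt0.
have t1 : t <= 1 by rewrite ge_min lexx.
have tr : t `^ r <= t * (d / 2).
  rewrite -mulr_powRB1 ?(ltW t0) //; apply: ler_wpM2l; first exact: ltW.
  rewrite -[X in _ <= X](@powRK' (d / 2) (r - 1)) ?(ltW d20) //.
  apply: ge0_ler_powR; first exact: ltW.
  - by rewrite nnegrE ltW.
  - by rewrite nnegrE powR_ge0.
  by rewrite ge_min lexx orbT.
exists (Num.min a (t * (d / 2))); split.
- by rewrite lt_min a0 mulr_gt0.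
- by rewrite ge_min lexx.
move=> h bh sh w hw.
have Nge0 := @pf_ge0 R X Y r; have NZ := @pfZ R X Y r r0.
have := ball_le Nge0 NZ bh (x, t *: w).
have -> : ((x, t *: w) : X * Y) = t *: (0, w) + (x, 0).
  by rewrite -pair_lin scaler0 add0r addr0.
rewrite (ball_lin Nge0 NZ bh) /psum_norm /= scaler0 add0r addr0 hx powR1 /=.
have hN : (1 + `|t *: w| `^ r) `^ r^-1 <= 1 + t `^ r.
  apply: le_trans (_ : (1 + t `^ r) `^ r^-1 <= 1 + t `^ r).
    apply: ge0_ler_powR.
    - by rewrite invr_ge0 ltW.
    - by rewrite nnegrE addr_ge0 ?powR_ge0.
    - by rewrite nnegrE addr_ge0 ?powR_ge0.
    rewrite lerD2l; apply: ge0_ler_powR; first exact: ltW.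
    - by rewrite nnegrE normr_ge0.
    - by rewrite nnegrE ltW.
    rewrite normrZ gtr0_norm // -[X in _ <= X]mulr1; apply: ler_wpM2l => //.
    exact: ltW.
  apply: ler1_powR; first by rewrite lerDl powR_ge0.
  by rewrite invf_le1 // ltW.
have hm : Num.min a (t * (d / 2)) <= t * (d / 2) by rewrite ge_min lexx orbT.
move=> hle.
have ht : t * h (0, w) < t * d.
  have := ler_norm (t * h (0, w) + h (x, 0)); lra.
by move: ht; rewrite ltr_pM2l // => /ltW.
Qed.

End Keys.

Local Close Scope classical_set_scope.

Theorem corollary4p4 (R : realType) (X Y : completeNormedModType R)
  (hX : exists x : X, x != 0) (hY : exists y : Y, y != 0) :
  (* (a) *)
  (wstar_LD2P (fun x : X => `|x|) ->
     wstar_LD2P (@psum_norm R X Y 1%E)) /\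
  (* (b) *)
  (forall p : \bar R, (1 < p)%E ->
     wstar_LD2P (fun x : X => `|x|) -> wstar_LD2P (fun y : Y => `|y|) ->
     wstar_LD2P (@psum_norm R X Y p)) /\
  (* (c) *)
  (forall p : \bar R, (1 < p)%E ->
     wstar_LD2P (@psum_norm R X Y p) -> wstar_LD2P (fun x : X => `|x|)).
Proof.
split; [|split].
- exact: part_a.
- case=> [r| |] // hp hLX hLY.
  + by rewrite lte_fin in hp; exact: part_b_fin.
  + exact: part_b_inf.
- case=> [r| |] // hp hL.
  + rewrite lte_fin in hp.
    have r0 : 0 < r by apply: lt_trans hp.
    apply: (@part_c_gen R X Y (@psum_norm R X Y r%:E)) hL.
    * exact: pf_ge0.
    * exact: pfZ.
    * exact: pf_le1.
    * exact: pf_le2.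
    * exact: pf_x0.
    * exact: key_fin.
  + apply: (@part_c_gen R X Y (@psum_norm R X Y +oo%E)) hL.
    * exact: pinf_ge0.
    * exact: pinfZ.
    * exact: pinf_le1.
    * exact: pinf_le2.
    * exact: pinf_x0.
    * exact: key_inf.
Qed.
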